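(* Let $f(x)\in\mathbb{Q}[x,x^{-1}]$ be a non-zero Laurent polynomial which is odd, i.e. $f(-x)=-f(x)$. Then $f$ satisfies WP: there exists a positive integer $N$ such that every rational number is of the form $f(a_1)+\cdots+f(a_N)$ with $a_1,\dots,a_N\in\mathbb{Q}^*$.
   Context: A rational function $f\in\mathbb{Q}(x)$ satisfies WP if for some $N\ge1$ every rational number is a sum of $N$ elements of $f(\mathbb{Q})$, the set of values of $f$ at rational non-poles. *)

(* Defs.v *)
From HB Require Import structures.
From mathcomp Require Import all_boot all_order all_algebra.
Set Implicit Arguments. Unset Strict Implicit. Unset Printing Implicit Defensive.
Import Order.TTheory GRing.Theory Num.Theory.
Local Open Scope ring_scope.

(* A Laurent polynomial f in Q[x, x^-1] is represented as f(x) = p(x) / x^m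
   with p : {poly rat} and m : nat (every Laurent polynomial has this form). *)
Definition laurent_eval (p : {poly rat}) (m : nat) (x : rat) : rat :=
  p.[x] / x ^+ m.

(* f is odd: f(-x) = -f(x) (as functions on Q^*; equivalent to the formal
   identity since Q^* is infinite). *)
Definition laurent_odd (p : {poly rat}) (m : nat) : Prop :=
  forall x : rat, x != 0 -> laurent_eval p m (- x) = - laurent_eval p m x.

(* Main.v *)
Require Import Defs.
From HB Require Import structures.
From mathcomp Require Import all_boot all_order all_algebra.
From mathcomp Require Import ring lra.
Import Order.TTheory GRing.Theory Num.Theory.
Set Implicit Arguments. Unset Strict Implicit. Unset Printing Implicit Defensive.
Local Open Scope ring_scope.

Definition Rep (F : rat -> rat) (K : nat) (v : rat) :=
  exists s : seq rat, size s = K /\ all (fun x => x != 0) s /\ v = \sum_(x <- s) F x.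
Definition Good F (G : rat -> rat) :=
  exists K (B : seq rat), forall t, t \notin B -> Rep F K (G t).
Definition oddF (F : rat -> rat) := forall x, x != 0 -> F (- x) = - F x.

Lemma rep_add F K L v w : Rep F K v -> Rep F L w -> Rep F (K + L) (v + w).
Proof.
move=> [s1 [h1 [a1 e1]]] [s2 [h2 [a2 e2]]]; exists (s1 ++ s2).
by rewrite size_cat all_cat h1 h2 a1 a2 big_cat e1 e2.
Qed.

Lemma rep_opp F K v : oddF F -> Rep F K v -> Rep F K (- v).
Proof.
move=> oF [s [h [a e]]]; exists (map -%R s); rewrite size_map h; split=> //.
split; first by rewrite all_map; apply/allP=> x xs /=; rewrite oppr_eq0 (allP a).
rewrite big_map e -sumrN !big_seq; apply: eq_bigr => x xs /=.
by rewrite oF // (allP a).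
Qed.

Lemma good_ext F G H : Good F G -> (forall t, t != 0 -> G t = H t) -> Good F H.
Proof.
move=> [K [B hB]] e; exists K, (0 :: B) => t; rewrite inE negb_or => /andP[t0 tB].
by rewrite -e //; apply: hB.
Qed.

Lemma good_add F G H : Good F G -> Good F H -> Good F (fun t => G t + H t).
Proof.
move=> [K [B hB]] [L [C hC]]; exists (K + L)%N, (B ++ C) => t.
rewrite mem_cat negb_or => /andP[tB tC]; exact: rep_add (hB _ tB) (hC _ tC).
Qed.

Lemma good_opp F G : oddF F -> Good F G -> Good F (fun t => - G t).
Proof. by move=> oF [K [B hB]]; exists K, B => t tB; apply: rep_opp (hB _ tB). Qed.

Lemma good0 F : Good F (fun _ => 0).
Proof. by exists 0%N, [::] => t _; exists [::]; rewrite big_nil. Qed.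

Lemma good_muln F G n : Good F G -> Good F (fun t => G t *+ n).
Proof.
move=> g; elim: n => [|n IH].
  by apply: (good_ext (good0 F)) => t _; rewrite mulr0n.
by apply: (good_ext (good_add g IH)) => t _; rewrite mulrS.
Qed.

Lemma good_comp F G phi psi : (forall t, psi (phi t) = t) -> Good F G ->
  Good F (fun t => G (phi t)).
Proof.
move=> K1 [K [B hB]]; exists K, (map psi B) => t tB; apply: hB.
by apply: contra tB => h; rewrite -[t]K1; apply: map_f.
Qed.

Lemma good_base F : Good F F.
Proof.
exists 1%N, [:: 0] => t; rewrite inE => t0; exists [:: t].
by rewrite big_seq1 /= t0.
Qed.

Lemma avoid (s : seq rat) : exists t, t \notin s.
Proof.
suff H : forall x, x \in s -> x < 1 + \sum_(y <- s) `|y|.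
  by exists (1 + \sum_(y <- s) `|y|); apply/negP => /H; rewrite ltxx.
elim: s => [//|y s IH] x; rewrite inE big_cons => /orP[/eqP->|xs].
  have := ler_norm y; have : 0 <= \sum_(z <- s) `|z| by apply: sumr_ge0.
  move=> *; lra.
have := IH _ xs; have := normr_ge0 y; move=> *; lra.
Qed.
Definition LE (c : nat -> rat) (n m : nat) (t : rat) :=
  (\sum_(i < n) c i * t ^+ i) / t ^+ m.

Lemma good_sub F G H : oddF F -> Good F G -> Good F H -> Good F (fun t => G t - H t).
Proof. by move=> oF g h; apply: good_add g (good_opp oF h). Qed.

Lemma LE_kill c n m k t : t != 0 ->
  LE c n m (2 * t) *+ (2 ^ m) - LE c n m t *+ (2 ^ k) =
  LE (fun i => c i * ((2 ^ i)%:R - (2 ^ k)%:R)) n m t.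
Proof.
move=> t0; rewrite /LE.
have -> : \sum_(i < n) c i * ((2 ^ i)%:R - (2 ^ k)%:R) * t ^+ i =
   \sum_(i < n) c i * (2 * t) ^+ i - 2 ^+ k * \sum_(i < n) c i * t ^+ i.
  rewrite mulr_sumr -sumrB; apply: eq_bigr => i _; rewrite !natrX exprMn; ring.
set A := \sum_(i < n) _; set B := \sum_(i < n) _.
rewrite -[_ *+ (2 ^ m)]mulr_natr -[_ *+ (2 ^ k)]mulr_natr !natrX.
rewrite exprMn; field.
by rewrite !expf_neq0.
Qed.

Lemma good_kill F c n m k : oddF F -> Good F (LE c n m) ->
  Good F (LE (fun i => c i * ((2 ^ i)%:R - (2 ^ k)%:R)) n m).
Proof.
move=> oF g.
have g2 : Good F (fun t => LE c n m (2 * t)).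
  apply: (good_comp (psi := fun u => u / 2) _ g) => t /=; by rewrite mulrAC divff ?mul1r.
apply: (good_ext (good_sub oF (good_muln (2 ^ m) g2) (good_muln (2 ^ k) g))).
by move=> t t0; rewrite LE_kill.
Qed.

Lemma good_killall F c n m ks : oddF F -> Good F (LE c n m) ->
  Good F (LE (fun i => c i * \prod_(k <- ks) ((2 ^ i)%:R - (2 ^ k)%:R)) n m).
Proof.
move=> oF g; elim: ks => [|k ks IH].
  apply: (good_ext g) => t _; rewrite /LE; congr (_ / _).
  by apply: eq_bigr => i _; rewrite big_nil mulr1.
apply: (good_ext (good_kill k oF IH)) => t _; rewrite /LE; congr (_ / _).
by apply: eq_bigr => i _; rewrite big_cons; ring.
Qed.

Lemma LE_iso c n m k0 t : (k0 < n)%N ->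
  LE (fun i => c i * \prod_(k <- [seq k <- iota 0 n | k != k0])
                       ((2 ^ i)%:R - (2 ^ k)%:R)) n m t =
  (c k0 * \prod_(k <- [seq k <- iota 0 n | k != k0]) ((2 ^ k0)%:R - (2 ^ k)%:R))
   * t ^+ k0 / t ^+ m.
Proof.
move=> hk; rewrite /LE (bigD1 (Ordinal hk)) //=.
rewrite [X in _ + X]big1 ?addr0 //.
move=> i /eqP hi; have hi' : val i != k0 by apply/eqP => e; apply: hi; apply: val_inj.
have im : (val i : nat) \in [seq k <- iota 0 n | k != k0].
  by rewrite mem_filter hi' mem_iota /= ltn_ord.
by rewrite (big_rem _ im) /= subrr mul0r mulr0 mul0r.
Qed.

Lemma prod_iso_neq0 n k0 :
  \prod_(k <- [seq k <- iota 0 n | k != k0]) ((2 ^ k0)%:R - (2 ^ k)%:R) != 0 :> rat.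
Proof.
rewrite prodf_seq_neq0; apply/allP => k; rewrite mem_filter => /andP[hk _] /=.
by rewrite subr_eq0 eqr_nat eqn_exp2l // eq_sym.
Qed.

Lemma wp_lin F s : oddF F -> s != 0 -> Good F (fun t => s * t) ->
  exists N : nat, (0 < N)%N /\
    forall q : rat, exists a : 'I_N -> rat,
      (forall i, a i != 0) /\ q = \sum_(i < N) F (a i).
Proof.
move=> oF s0 [K [B hB]]; exists (K + K + 2)%N; split; first by rewrite addn2.
move=> q; have [t1 ht1] := avoid (B ++ [seq q / s - b | b <- B]).
move: ht1; rewrite mem_cat negb_or => /andP[t1B t2B].
have t2B' : q / s - t1 \notin B.
  by apply: contra t2B => h; apply/mapP; exists (q / s - t1) => //; ring.
have r0 : Rep F 2 0.
  exists [:: 1; -1]; rewrite /= big_cons big_seq1 oF ?oner_eq0 //; split=> //.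
  by rewrite subrr.
have := rep_add (rep_add (hB _ t1B) (hB _ t2B')) r0.
have -> : s * t1 + s * (q / s - t1) + 0 = q by field.
move=> [l [hl [al el]]]; exists (fun i => nth 1 l i); split.
  by move=> i; apply: (allP al); apply: mem_nth; rewrite hl.
by rewrite el (big_nth 1) hl big_mkord.
Qed.

Lemma laurent_good p m : Good (laurent_eval p m) (LE (fun i => p`_i) (size p) m).
Proof. by apply: (good_ext (good_base _)) => t _; rewrite /laurent_eval /LE horner_coef. Qed.

Lemma good_mono F A d : oddF F -> A != 0 -> (0 < d)%N -> Good F (fun t => A * t ^+ d) ->
  exists N : nat, (0 < N)%N /\
    forall q : rat, exists a : 'I_N -> rat,
      (forall i, a i != 0) /\ q = \sum_(i < N) F (a i).
Proof.
move=> oF A0 d0 g.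
have g1 : Good F (fun t => A * (1 + t) ^+ d).
  by apply: (good_comp (psi := fun u => u - 1) _ g) => t /=; ring.
have g2 : Good F (LE (fun j => A * 'C(d, j)%:R) d.+1 0).
  apply: (good_ext g1) => t _; rewrite /LE expr0 invr1 mulr1 exprDn mulr_sumr.
  by apply: eq_bigr => i _; rewrite expr1n mul1r -mulr_natr; ring.
have g3 := good_killall [seq k <- iota 0 d.+1 | k != 1%N] oF g2.
apply: (wp_lin oF _ (good_ext g3 _)).
  2: by move=> t _; rewrite LE_iso // expr0 invr1 mulr1 expr1.
rewrite mulf_neq0 ?prod_iso_neq0 // mulf_neq0 // bin1 pnatr_eq0 -lt0n //.
Qed.

Theorem corollary3p5 (p : {poly rat}) (m : nat) :
  p != 0 -> laurent_odd p m ->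
  exists N : nat, (0 < N)%N /\
    forall q : rat, exists a : 'I_N -> rat,
      (forall i, a i != 0) /\ q = \sum_(i < N) laurent_eval p m (a i).
Proof.
move=> p0 hodd.
have oF : oddF (laurent_eval p m) by [].
have sp : (0 < size p)%N by rewrite size_poly_gt0.
have [k0 [hk0 pk0 km]] : exists k0, [/\ (k0 < size p)%N, p`_k0 != 0 & k0 != m].
  case: (boolP [exists k : 'I_(size p), (val k != m) && (p`_k != 0)]).
    by move=> /existsP[k /andP[h1 h2]]; exists k; split.
  move=> /existsPn hn; exfalso.
  have lc : p`_(size p).-1 != 0 by rewrite -lead_coefE lead_coef_eq0.
  have em : (size p).-1 = m.
    apply/eqP; apply: contraT => ne.
    have hlt : ((size p).-1 < size p)%N by rewrite ltn_predL.
    by have := hn (Ordinal hlt); rewrite /= ne lc.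
  have sz : size p = m.+1 by rewrite -em prednK.
  have fx : forall x, x != 0 -> laurent_eval p m x = p`_m.
    move=> x x0; rewrite /laurent_eval horner_coef sz big_ord_recr /=.
    rewrite big1 ?add0r ?mulfK ?expf_neq0 // => i _.
    have := hn (cast_ord (esym sz) (widen_ord (leqnSn m) i)).
    rewrite /= (ltn_eqF (ltn_ord i)) /= => /negbNE/eqP ->; rewrite mul0r //.
  have := hodd 1 (oner_neq0 _); rewrite !fx ?oppr_eq0 ?oner_eq0 // => /eqP.
  rewrite -subr_eq0 opprK -mulr2n mulrn_eq0 /=; rewrite -em => /eqP h.
  by move: lc; rewrite h eqxx.
set ks := [seq k <- iota 0 (size p) | k != k0].
have g := good_killall ks oF (laurent_good p m).
set A := p`_k0 * \prod_(k <- ks) ((2 ^ k0)%:R - (2 ^ k)%:R).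
have A0 : A != 0 by rewrite mulf_neq0 // prod_iso_neq0.
have g' : Good (laurent_eval p m) (fun t => A * t ^+ k0 / t ^+ m).
  by apply: (good_ext g) => t _; rewrite LE_iso.
case: (ltngtP k0 m) => hkm; last by move: km; rewrite hkm eqxx.
  have g2 := good_comp (phi := fun t => t^-1) (psi := fun t => t^-1) invrK g'.
  apply: (good_mono oF A0 (_ : (0 < m - k0)%N) (good_ext g2 _)).
    by rewrite subn_gt0.
  move=> t t0 /=; rewrite !exprVn.
  have -> : t ^+ m = t ^+ (m - k0) * t ^+ k0 by rewrite -exprD subnK // ltnW.
  field.
  by rewrite !expf_neq0.
apply: (good_mono oF A0 (_ : (0 < k0 - m)%N) (good_ext g' _)).
  by rewrite subn_gt0.
move=> t t0 /=.
have -> : t ^+ k0 = t ^+ (k0 - m) * t ^+ m by rewrite -exprD subnK // ltnW.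
field.
by rewrite !expf_neq0.
Qed.
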